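(* Let $(f,g),(f',g')\in\Theta$ both satisfy the diversity condition and satisfy $p_{f,g}(y\mid x)=p_{f',g'}(y\mid x)$ for all $(x,y)\in\mathcal X\times\mathcal Y$. Then for any two choices of pivot and subset, $(\tilde y,\mathcal J)$ and $(\hat y,\mathcal K)$ with $\mathcal J\subseteq\mathcal Y\setminus\{\tilde y\}$, $\mathcal K\subseteq\mathcal Y\setminus\{\hat y\}$, $|\mathcal J|=|\mathcal K|=m$, such that the corresponding shifted unembedding matrices $\tilde L_{\mathcal J}$ and $\hat L_{\mathcal K}$ of $(f,g)$ are invertible, one has $$\tilde L_{\mathcal J}^{-\top}\tilde L_{\mathcal J}'^{\top}=\hat L_{\mathcal K}^{-\top}\hat L_{\mathcal K}'^{\top}.$$
   Context: Model class $\Theta$: pairs $(f,g)$, $f:\mathcal X\to\mathbb R^m$, $g:\mathcal Y\to\mathbb R^m$, $\mathcal Y$ finite with $k>m$ labels, $\sum_y g(y)=0$, inducing $p_{f,g}(y\mid x)\propto\exp(f(x)^\top g(y))$; $p_x$ is the data distribution. Logits $u(x)=(f(x)^\top g(y))_{y\in\mathcal Y}$. Diversity condition: $\dim\mathrm{span}\{u(x):x\in\mathrm{supp}(p_x)\}=m$. For a pivot $\tilde y$ and $\mathcal J=\{y_1,\dots,y_m\}\subseteq\mathcal Y\setminus\{\tilde y\}$, $\tilde L_{\mathcal J}=(g(y_1)-g(\tilde y)\ \cdots\ g(y_m)-g(\tilde y))\in\mathbb R^{m\times m}$; $\tilde L'_{\mathcal J}$ is defined in the same way from $g'$; $\hat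 L_{\mathcal K},\hat L'_{\mathcal K}$ likewise for pivot $\hat y$ and subset $\mathcal K$. *)

(* Defs.v *)
From HB Require Import structures.
From mathcomp Require Import all_boot all_order all_algebra.
From mathcomp Require Import all_classical all_reals.
From mathcomp Require Import sequences exp.
Set Implicit Arguments. Unset Strict Implicit. Unset Printing Implicit Defensive.
Import Order.TTheory GRing.Theory Num.Theory.
Local Open Scope ring_scope.

Section Defs.
Variables (R : realType) (X : Type) (Y : finType) (m : nat).

Definition inner (a b : 'rV[R]_m) : R := (a *m b^T) ord0 ord0.

Definition cond_prob (f : X -> 'rV[R]_m) (g : Y -> 'rV[R]_m) (x : X) (y : Y) : R :=
  expR (inner (f x) (g y)) / \sum_(y' : Y) expR (inner (f x) (g y')).

Definition logits (f : X -> 'rV[R]_m) (g : Y -> 'rV[R]_m) (x : X) : 'rV[R]_#|Y| :=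
  \row_(j < #|Y|) inner (f x) (g (enum_val j)).

(* dim span { u(x) : x in supp } = m, where the dimension of the span of a
   (possibly infinite) family is the maximal rank of a finite subfamily. *)
Definition diversity (supp : X -> Prop) (f : X -> 'rV[R]_m) (g : Y -> 'rV[R]_m) : Prop :=
  (exists (n : nat) (xs : 'I_n -> X), (forall i, supp (xs i)) /\
      \rank (\matrix_(i < n, j < #|Y|) logits f g (xs i) ord0 j) = m)
  /\ (forall (n : nat) (xs : 'I_n -> X), (forall i, supp (xs i)) ->
      (\rank (\matrix_(i < n, j < #|Y|) logits f g (xs i) ord0 j) <= m)%N).

Definition in_Theta (g : Y -> 'rV[R]_m) : Prop := \sum_(y : Y) g y = 0.

Definition shiftedL (g : Y -> 'rV[R]_m) (pivot : Y) (J : 'I_m -> Y) : 'M[R]_m :=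
  \matrix_(i < m, j < m) (g (J j) ord0 i - g pivot ord0 i).

(* J is an m-element subset of Y \ {pivot}, given as an injective enumeration *)
Definition valid_subset (pivot : Y) (J : 'I_m -> Y) : Prop :=
  injective J /\ (forall j, J j != pivot).

End Defs.

(* Main.v *)
Require Import Defs.
From HB Require Import structures.
From mathcomp Require Import all_boot all_order all_algebra.
From mathcomp Require Import all_classical all_reals.
From mathcomp Require Import sequences exp.
From mathcomp Require Import ring.
Import Order.TTheory GRing.Theory Num.Theory.
Local Open Scope ring_scope.

Lemma diff_eq (R : realType) (X : Type) (Y : finType) (m : nat)
  (f f' : X -> 'rV[R]_m) (g g' : Y -> 'rV[R]_m) :
  (forall x y, cond_prob f g x y = cond_prob f' g' x y) ->
  forall x y z, inner (f x) (g y) - inner (f x) (g z) =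
                inner (f' x) (g' y) - inner (f' x) (g' z).
Proof.
move=> H x y z.
have S0 : forall (h : X -> 'rV[R]_m) (k : Y -> 'rV[R]_m),
   0 < \sum_(y' : Y) expR (inner (h x) (k y')).
  move=> h k; rewrite (bigD1 y) //= ltr_pwDl ?expR_gt0 //.
  by apply: sumr_ge0 => i _; rewrite expR_ge0.
have Hy := H x y; have Hz := H x z; rewrite /cond_prob in Hy Hz.
have : expR (inner (f x) (g y)) / expR (inner (f x) (g z)) =
       expR (inner (f' x) (g' y)) / expR (inner (f' x) (g' z)).
  have e1 : forall a b (S : R), 0 < S -> expR a / expR b = (expR a / S) / (expR b / S).
    move=> a b S HS; have Sn : S != 0 by rewrite gt_eqF.
    have bn : expR b != 0 by rewrite gt_eqF ?expR_gt0.
    by field; rewrite Sn bn.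
  by rewrite (e1 _ _ _ (S0 f g)) (e1 _ _ _ (S0 f' g')) Hy Hz.
by rewrite -!expRB => /expR_inj.
Qed.

Lemma mulL (R : realType) (m : nat) (Y : finType) (a : 'rV[R]_m) (g : Y -> 'rV[R]_m)
  yt (J : 'I_m -> Y) j :
  (a *m shiftedL g yt J) ord0 j = inner a (g (J j)) - inner a (g yt).
Proof.
rewrite /inner !mxE -sumrB; apply: eq_bigr => i _.
by rewrite !mxE mulrBr.
Qed.

Theorem mainTheorem10 (R : realType) (X : Type) (Y : finType) (m : nat)
  (supp : X -> Prop)
  (f f' : X -> 'rV[R]_m) (g g' : Y -> 'rV[R]_m) :
  (m < #|Y|)%N ->
  in_Theta g -> in_Theta g' ->
  diversity supp f g -> diversity supp f' g' ->
  (forall x y, cond_prob f g x y = cond_prob f' g' x y) ->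
  forall (yt : Y) (J : 'I_m -> Y) (yh : Y) (K : 'I_m -> Y),
  valid_subset yt J -> valid_subset yh K ->
  shiftedL g yt J \in unitmx -> shiftedL g yh K \in unitmx ->
  invmx (shiftedL g yt J)^T *m (shiftedL g' yt J)^T
  = invmx (shiftedL g yh K)^T *m (shiftedL g' yh K)^T.
Proof.
move=> _ _ _ _ [[n [xs [_ Hrk]]] _] H yt J yh K _ _ UJ UK.
rewrite -!trmx_inv -!trmx_mul; congr trmx.
have key : forall x yp (L : 'I_m -> Y), shiftedL g yp L \in unitmx ->
    f x = f' x *m (shiftedL g' yp L *m invmx (shiftedL g yp L)).
  move=> x yp L U.
  have E : f x *m shiftedL g yp L = f' x *m shiftedL g' yp L.
    apply/rowP => j; rewrite !mulL; exact: diff_eq.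
  by rewrite mulmxA -E -mulmxA mulmxV // mulmx1.
set D := (shiftedL g' yt J *m invmx (shiftedL g yt J)) - (shiftedL g' yh K *m invmx (shiftedL g yh K)).
have HD : forall x, f' x *m D = 0.
  by move=> x; rewrite /D mulmxBr -!key // subrr.
pose F := \matrix_(i < n, j < m) f' (xs i) ord0 j.
pose G := \matrix_(i < m, j < #|Y|) g' (enum_val j) ord0 i.
have EM : \matrix_(i < n, j < #|Y|) logits f' g' (xs i) ord0 j = F *m G.
  apply/matrixP => i j; rewrite !mxE /inner !mxE; apply: eq_bigr => k _.
  by rewrite !mxE.
have rF : row_full F.
  rewrite /row_full eqn_leq rank_leq_col /= -{1}Hrk EM; exact: mxrankM_maxl.
have FD : F *m D = 0.
  apply/row_matrixP => i; rewrite row_mul row0.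
  have -> : row i F = f' (xs i) by apply/rowP => j; rewrite !mxE.
  exact: HD.
apply/eqP; rewrite -subr_eq0 -/D; apply/eqP.
case/row_fullP: rF => B0 HB.
by rewrite -[D]mul1mx -HB -mulmxA FD mulmx0.
Qed.
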